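(* Let $\lambda, v, u$ be positive integers and let $M=m_1,m_2,\ldots,m_t$ be a sequence of integers with $m_1\leq m_2\leq\cdots\leq m_t$ and $m_i\equiv 0\pmod{2}$ for all $i\in\{1,2,\ldots,t\}$. If there exists an $(M)$-cycle decomposition of $\lambda K_{v,u}$, then all of the following hold: (a) $m_t\leq 2\min(\{v,u\})$; (b) $\lambda v\equiv \lambda u\equiv 0\pmod{2}$; (c) $t\leq \frac{\lambda}{2}vu-m_t+2$ if $\lambda$ is even; (d) $2\nu_2(M)\leq (\lambda-1)vu$ if $\lambda$ is odd.
   Context: $\lambda K_{v,u}$ denotes the multigraph with vertex set $V\cup U$, where $V,U$ are disjoint, $|V|=v$, $|U|=u$, in which every $x\in V$ and $y\in U$ are joined by exactly $\lambda$ parallel edges and there are no other edges. For $m\geq 2$, an $m$-cycle is a subgraph consisting of $m$ distinct vertices $x_0,\ldots,x_{m-1}$ and one edge joining $x_i$ and $x_{i+1}$ for each $i$ (indices mod $m$); in particular a $2$-cycle consists of two parallel edges between two vertices. An $(M)$-cycle decomposition of a multigraph $G$, for $M=m_1,\ldots,m_t$, is a partition of the edge set of $G$ into $t$ cycles of lengths $m_1,\ldots,m_t$ respectively. $\nu_k(M)$ denotes the number of indices $i$ with $m_i=k$. *)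

(* Defs.v *)
From mathcomp Require Import all_boot.
Set Implicit Arguments. Unset Strict Implicit. Unset Printing Implicit Defensive.

(* The multigraph lambda K_{v,u}: vertex set V + U with V = 'I_v, U = 'I_u;
   edges are triples (x, y, k) with x in V, y in U, k in 'I_lam
   (the lam parallel edges joining x and y). *)
Definition vtx (v u : nat) := ('I_v + 'I_u)%type.
Definition edge (v u lam : nat) := ('I_v * 'I_u * 'I_lam)%type.

Definition joins (v u lam : nat) (e : edge v u lam) (a b : vtx v u) : bool :=
  ((a == inl e.1.1) && (b == inr e.1.2)) || ((a == inr e.1.2) && (b == inl e.1.1)).

Definition is_cycle (v u lam m : nat) (C : {set edge v u lam}) : Prop :=
  2 <= m /\
  exists (x : 'I_m -> vtx v u) (e : 'I_m -> edge v u lam),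
    injective x /\ injective e /\
    (forall i : 'I_m, joins (e i) (x i) (x (ordS i))) /\
    C = [set e i | i : 'I_m].

Definition cycle_decomposition (v u lam : nat) (M : seq nat) : Prop :=
  exists C : 'I_(size M) -> {set edge v u lam},
    (forall i j, i != j -> [disjoint C i & C j]) /\
    (forall e : edge v u lam, exists i, e \in C i) /\
    (forall i : 'I_(size M), is_cycle (nth 0 M i) (C i)).

Definition nu (k : nat) (M : seq nat) : nat := count (pred1 k) M.

(* Main.v *)
Require Import Defs.
From mathcomp Require Import all_boot zify.
Set Implicit Arguments. Unset Strict Implicit. Unset Printing Implicit Defensive.

Lemma ordS_val m (i : 'I_m) : nat_of_ord (ordS i) = if i.+1 == m then 0 else i.+1.
Proof.
rewrite /=; have := ltn_ord i; rewrite leq_eqVlt => /orP[/eqP->|h].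
  by rewrite eqxx modnn.
by rewrite modn_small // (ltn_eqF h).
Qed.

Lemma ordS_neq m (i : 'I_m) : 1 < m -> ordS i != i.
Proof. move=> hm; apply/eqP => /(congr1 (@nat_of_ord _)); rewrite ordS_val; have := ltn_ord i.
case: eqP; lia. Qed.

Lemma ordSS_neq m (i : 'I_m) : 2 < m -> ordS (ordS i) != i.
Proof. move=> hm; apply/eqP => /(congr1 (@nat_of_ord _)); rewrite !ordS_val; have := ltn_ord i.
case: eqP => /=; case: eqP; lia. Qed.

Lemma ordS_pred0 m (j k : 'I_m) : ordS k = j -> 0 < j -> k < j.
Proof. move=> /(congr1 (@nat_of_ord _)); rewrite ordS_val; case: eqP; lia. Qed.

Section Cyc.
Variables v u lam : nat.
Local Notation E := (edge v u lam).
Local Notation Pr := ('I_v * 'I_u)%type.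
Local Notation V := (vtx v u).

Definition inc (w : V) (p : Pr) : bool := (w == inl p.1) || (w == inr p.2).
Definition star (w : V) : {set E} := [set e : E | inc w e.1].
Definition starP (w : V) : {set Pr} := [set p : Pr | inc w p].

Lemma joins_inc (e : E) a b w : joins e a b -> inc w e.1 = (w == a) || (w == b).
Proof. by rewrite /joins /inc; case/orP => /andP[/eqP-> /eqP->] //; rewrite orbC. Qed.

Lemma joins_neq (e : E) a b : joins e a b -> a != b.
Proof. by rewrite /joins; case/orP => /andP[/eqP-> /eqP->]. Qed.

Section OneCycle.
Variables (m : nat) (x : 'I_m -> V) (e : 'I_m -> E).
Hypotheses (hm : 1 < m) (xinj : injective x) (einj : injective e)
  (hj : forall i, joins (e i) (x i) (x (ordS i))).

Lemma cyc_deg_idx w : ~~ odd #|[set i | inc w (e i).1]|.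
Proof.
have -> : [set i | inc w (e i).1] = [set i | w == x i] :|: (@ordS m @^-1: [set i | w == x i]).
  by apply/setP => i; rewrite !inE (joins_inc _ (hj i)).
rewrite cardsU card_preimset; last exact: ordS_inj.
have -> : [set i | w == x i] :&: @ordS m @^-1: [set i | w == x i] = set0.
  apply/setP => i; rewrite !inE; apply/negP => /andP[/eqP h1 /eqP h2].
  by move: (ordS_neq i hm); rewrite (xinj (etrans (esym h2) h1)) eqxx.
by rewrite cards0 subn0 addnn odd_double.
Qed.

Lemma cyc_deg w : ~~ odd #|[set e i | i : 'I_m] :&: star w|.
Proof.
have -> : [set e i | i : 'I_m] :&: star w = e @: [set i | inc w (e i).1].
  apply/setP => y; rewrite /star !inE; apply/andP/imsetP.
    by case=> /imsetP[i _ ->] h; exists i; rewrite // inE.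
  by case=> i; rewrite inE => h ->; split; [apply: imset_f|].
by rewrite card_imset //; apply: cyc_deg_idx.
Qed.

Lemma cyc_card : #|[set e i | i : 'I_m]| = m.
Proof. by rewrite card_imset // card_ord. Qed.

Lemma cyc_pr_inj : 2 < m -> injective (fun i => (e i).1).
Proof.
move=> h3 i j eij.
have := hj i; have := hj j; rewrite /joins -eij.
case/orP => /andP[/eqP h1 /eqP h2]; case/orP => /andP[/eqP h3' /eqP h4].
- by apply: xinj; rewrite h1 h3'.
- have ej : j = ordS i by apply: xinj; rewrite h1 h4.
  have ei : i = ordS j by apply: xinj; rewrite h3' h2.
  by move: (ordSS_neq i h3); rewrite -ej -ei eqxx.
- have ej : j = ordS i by apply: xinj; rewrite h1 h4.
  have ei : i = ordS j by apply: xinj; rewrite h3' h2.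
  by move: (ordSS_neq i h3); rewrite -ej -ei eqxx.
- by apply: xinj; rewrite h1 h3'.
Qed.

Lemma cyc_bound_v : m <= 2 * v.
Proof.
pose g i := ((e i).1.1, x i == inl (e i).1.1).
have ginj : injective g.
  move=> i j [] h1 h2.
  case hi: (x i == inl (e i).1.1) h2 => h2.
    by apply: xinj; rewrite (eqP hi) (eqP (esym h2)) h1.
  have hi' : x (ordS i) = inl (e i).1.1.
    by move: (hj i); rewrite /joins hi /= => /andP[_ /eqP].
  have hj' : x (ordS j) = inl (e j).1.1.
    by move: (hj j); rewrite /joins -h2 /= => /andP[_ /eqP].
  by apply: ordS_inj; apply: xinj; rewrite hi' hj' h1.
have := @leq_card _ _ g ginj; rewrite card_ord card_prod card_ord card_bool.
by rewrite mulnC.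
Qed.

Lemma cyc_bound_u : m <= 2 * u.
Proof.
pose g i := ((e i).1.2, x i == inr (e i).1.2).
have ginj : injective g.
  move=> i j [] h1 h2.
  case hi: (x i == inr (e i).1.2) h2 => h2.
    by apply: xinj; rewrite (eqP hi) (eqP (esym h2)) h1.
  have hi' : x (ordS i) = inr (e i).1.2.
    move: (hj i); rewrite /joins.
    by case/orP => /andP[/eqP h /eqP] //; rewrite h eqxx in hi.
  have hj' : x (ordS j) = inr (e j).1.2.
    move: (hj j); rewrite /joins.
    by case/orP => /andP[/eqP h /eqP] //; rewrite h -h1 eqxx in h2.
  by apply: ordS_inj; apply: xinj; rewrite hi' hj' h1.
have := @leq_card _ _ g ginj; rewrite card_ord card_prod card_ord card_bool.
by rewrite mulnC.
Qed.

Lemma cyc_path : 2 < m -> exists q, q \in [set (e i).1 | i : 'I_m] /\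
  forall Z : {set Pr}, Z \subset [set (e i).1 | i : 'I_m] :\ q ->
    (forall w, ~~ odd #|Z :&: starP w|) -> Z = set0.
Proof.
move=> h3; have m0 : 0 < m by lia.
pose i0 := Ordinal m0.
exists (e (ord_pred i0)).1; split; first by apply: imset_f.
move=> Z sZ hev; case: (set_0Vmem Z) => [//|[p pZ]].
have /imsetP[k0 _ pk0] : p \in [set (e i).1 | i : 'I_m].
  by move: (subsetP sZ p pZ); rewrite inE => /andP[].
have hk0 : (e k0).1 \in Z by rewrite -pk0.
case: (@arg_minnP _ k0 (fun j => (e j).1 \in Z) (fun j : 'I_m => nat_of_ord j) hk0) => j hjZ hmin.
have hZ : Z :&: starP (x j) = [set (e j).1].
  apply/setP => q; rewrite /starP !inE; apply/andP/eqP.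
    case=> qZ hq.
    have /imsetP[k _ qk] : q \in [set (e i).1 | i : 'I_m].
      by move: (subsetP sZ q qZ); rewrite inE => /andP[].
    move: hq; rewrite qk (joins_inc _ (hj k)) => /orP[/eqP/xinj -> //|/eqP/xinj ejk].
    have [j0|jpos] := posnP j.
      have ji0 : j = i0 by apply: val_inj.
      have : k = ord_pred i0 by rewrite -ji0 ejk ordSK.
      move=> kq; move: (subsetP sZ q qZ); by rewrite !inE qk kq eqxx.
    have := ordS_pred0 (esym ejk) jpos.
    by move: (hmin k); rewrite -qk => /(_ qZ); lia.
  move=> ->; split=> //; by rewrite (joins_inc _ (hj j)) eqxx.
by move: (hev (x j)); rewrite hZ cards1.
Qed.

End OneCycle.

Lemma inc_pair (p p' : Pr) : (forall w, inc w p = inc w p') -> p = p'.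
Proof.
case: p => a b; case: p' => a' b' h.
move: (h (inl a)) (h (inr b)); rewrite /inc /= !eqxx /=.
move=> /esym/orP[/eqP[->]|//] /esym/eqP[->] //.
Qed.

Definition pr (e : E) : Pr := e.1.

Lemma is_cycle_card m (C : {set E}) : is_cycle m C -> #|C| = m.
Proof. by case=> hm [x [e [xi [ei [hj ->]]]]]; apply: cyc_card. Qed.

Lemma is_cycle_ge2 m (C : {set E}) : is_cycle m C -> 1 < m.
Proof. by case. Qed.

Lemma is_cycle_deg m (C : {set E}) w : is_cycle m C -> ~~ odd #|C :&: star w|.
Proof. by case=> hm [x [e [xi [ei [hj ->]]]]]; apply: (cyc_deg hm xi ei hj). Qed.

Lemma is_cycle_bound m (C : {set E}) : is_cycle m C -> m <= 2 * v /\ m <= 2 * u.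
Proof.
by case=> hm [x [e [xi [ei [hj _]]]]]; split; [apply: (cyc_bound_v xi) | apply: (cyc_bound_u xi)].
Qed.

Lemma is_cycle_prinj m (C : {set E}) : is_cycle m C -> 2 < m -> {in C &, injective pr}.
Proof.
case=> hm [x [e [xi [ei [hj ->]]]]] h3 a b /imsetP[i _ ->] /imsetP[j _ ->] hij.
by rewrite (cyc_pr_inj xi hj h3 hij).
Qed.

Lemma is_cycle_path m (C : {set E}) : is_cycle m C -> 2 < m -> exists q, q \in pr @: C /\
  forall Z : {set Pr}, Z \subset (pr @: C) :\ q ->
    (forall w, ~~ odd #|Z :&: starP w|) -> Z = set0.
Proof.
case=> hm [x [e [xi [ei [hj ->]]]]] h3.
have -> : pr @: [set e i | i : 'I_m] = [set (e i).1 | i : 'I_m].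
  by rewrite -imset_comp.
exact: (cyc_path hm xi hj h3).
Qed.

Lemma is_cycle2_pair (C : {set E}) : is_cycle 2 C -> {in C &, forall a b, pr a = pr b}.
Proof.
case=> hm [x [e [xi [ei [hj ->]]]]] a b /imsetP[i _ ->] /imsetP[j _ ->].
have [->//|nij] := eqVneq i j.
have nij' : nat_of_ord i != nat_of_ord j by move: nij; rewrite -(inj_eq (@ord_inj _)).
have jS : j = ordS i.
  apply: ord_inj; move: nij'; have := ordS_val i.
  have := ltn_ord i; have := ltn_ord j; case: eqP => /=; lia.
have SS : ordS j = i.
  apply: ord_inj; move: nij'; have := ordS_val j.
  have := ltn_ord i; have := ltn_ord j; case: eqP => /=; lia.
apply: inc_pair => w; rewrite /pr (joins_inc _ (hj i)) (joins_inc _ (hj j)).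
by rewrite -jS SS orbC.
Qed.

End Cyc.

Lemma card_ind (T : finType) (A : {set T}) : #|A| = \sum_x (x \in A : nat).
Proof. by rewrite -sum1_card big_mkcond /=; apply: eq_bigr => x _; case: (x \in A). Qed.

Lemma part_card (T : finType) n (C : 'I_n -> {set T}) :
  (forall i j, i != j -> [disjoint C i & C j]) -> (forall x, exists i, x \in C i) ->
  forall A : {set T}, #|A| = \sum_i #|A :&: C i|.
Proof.
move=> disj cov A; rewrite card_ind.
under [RHS]eq_bigr => i _ do rewrite card_ind.
rewrite exchange_big /=; apply: eq_bigr => x _.
have [i0 hi0] := cov x; rewrite (bigD1 i0) //= big1 ?addn0 => [|j nj].
  by rewrite inE hi0 andbT.
by rewrite inE (disjointFr (disj i0 j _) hi0) ?andbF // eq_sym.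
Qed.

Lemma sum_even (I : finType) (S : {pred I}) (f : I -> nat) :
  (forall i, i \in S -> ~~ odd (f i)) -> ~~ odd (\sum_(i in S) f i).
Proof.
move=> h; apply: (big_ind (fun x => ~~ odd x)) => //.
  by move=> a b ha hb; rewrite oddD (negbTE ha) (negbTE hb).
Qed.

Lemma sum_odd_eq (I : finType) (S : {pred I}) (f g : I -> nat) :
  (forall i, i \in S -> odd (f i) = odd (g i)) ->
  odd (\sum_(i in S) f i) = odd (\sum_(i in S) g i).
Proof.
move=> h; apply: (big_ind2 (fun x y => odd x = odd y)) => //.
by move=> a b c d h1 h2; rewrite !oddD h1 h2.
Qed.

Lemma sum_odd_card (I : finType) (S : {set I}) (f : I -> nat) :
  odd (\sum_(i in S) f i) = odd #|[set i in S | odd (f i)]|.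
Proof.
rewrite (@sum_odd_eq _ _ _ (fun i => odd (f i) : nat)); last by move=> i _; rewrite oddb.
rewrite card_ind big_mkcond /=; congr odd; apply: eq_bigr => i _.
by rewrite inE; case: (i \in S).
Qed.

Lemma card_cond (I : finType) (S : {set I}) (Q : pred I) :
  #|[set i in S | Q i]| = \sum_(i in S) (Q i : nat).
Proof.
rewrite card_ind [RHS]big_mkcond /=; apply: eq_bigr => i _.
by rewrite inE; case: (i \in S).
Qed.

Lemma double_count (I T : finType) (S : {set I}) (B : {set T}) (P : I -> {set T}) :
  \sum_(p in B) #|[set i in S | p \in P i]| = \sum_(i in S) #|P i :&: B|.
Proof.
transitivity (\sum_(p in B) \sum_(i in S) (p \in P i : nat)).
  by apply: eq_bigr => p _; rewrite card_cond.
rewrite exchange_big /=; apply: eq_bigr => i _.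
rewrite -(card_cond B (fun p => p \in P i)); by apply: eq_card => p; rewrite !inE andbC.
Qed.

Definition sd (T : finType) (A B : {set T}) := (A :\: B) :|: (B :\: A).

Lemma in_sd (T : finType) (A B : {set T}) x : (x \in sd A B) = (x \in A) (+) (x \in B).
Proof. by rewrite !inE; case: (x \in A); case: (x \in B). Qed.

Lemma sd0 (T : finType) (A B : {set T}) : sd A B = set0 -> A = B.
Proof.
move=> h; apply/setP => x; move/setP: h => /(_ x); rewrite in_sd inE.
by case: (x \in A); case: (x \in B).
Qed.

Lemma odd_card_sd (T : finType) (A B : {set T}) :
  odd #|sd A B| = odd #|A| (+) odd #|B|.
Proof.
rewrite /sd cardsU.
have -> : (A :\: B) :&: (B :\: A) = set0.
  by apply/setP => x; rewrite !inE; case: (x \in A); case: (x \in B).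
rewrite cards0 subn0 oddD.
have h1 := cardsID B A; have h2 := cardsID A B.
rewrite setIC in h2.
move: h1 h2; set a := #|A :&: B|; move=> h1 h2.
rewrite -h1 -h2 !oddD; by case: (odd a); case: (odd #|A :\: B|); case: (odd #|B :\: A|).
Qed.

Section Fam.
Variables (I T : finType) (P : I -> {set T}).

Definition mult (S : {set I}) p := #|[set i in S | p \in P i]|.
Definition sumset (S : {set I}) := [set p | odd (mult S p)].

Lemma sumset_sd S1 S2 : sumset (sd S1 S2) = sd (sumset S1) (sumset S2).
Proof.
apply/setP => p; rewrite in_sd !inE /mult -odd_card_sd; congr odd.
by apply: eq_card => i; rewrite in_sd !inE; case: (i \in S1); case: (i \in S2); case: (p \in P i).
Qed.

Lemma sumset_sub S : sumset S \subset \bigcup_(i in S) P i.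
Proof.
apply/subsetP => p; rewrite inE /mult => h.
have : 0 < #|[set i in S | p \in P i]| by case: #|_| h.
case/card_gt0P => i; rewrite inE => /andP[iS pi].
by apply/bigcupP; exists i.
Qed.

Lemma indep_bound (T0 : {set I}) (X Q : {set T}) :
  sumset T0 = X ->
  (forall T1 : {set I}, T1 \subset T0 -> sumset T1 = X -> #|T0| <= #|T1|) ->
  Q \subset X ->
  (forall S : {set I}, S \subset T0 -> sumset S \subset Q -> sumset S = set0) ->
  #|T0| + #|Q| <= #|\bigcup_(i in T0) P i|.
Proof.
move=> hX hmin hQ hpath.
set E' := \bigcup_(i in T0) P i.
pose f S := sumset S :\: Q.
have finj : {in powerset T0 &, injective f}.
  move=> S1 S2; rewrite !powersetE => s1 s2 hf.
  have ssub : sd S1 S2 \subset T0.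
    apply/subsetP => i; rewrite in_sd.
    by case h1: (i \in S1); case h2: (i \in S2) => //= _;
       [apply: (subsetP s1) | apply: (subsetP s2)].
  have z : sumset (sd S1 S2) = set0.
    apply: hpath => //; apply/subsetP => p; rewrite sumset_sd in_sd.
    move/setP: hf => /(_ p); rewrite !inE.
    by case: (p \in Q) => //=; case: (odd (mult S1 p)); case: (odd (mult S2 p)).
  have hT1 : sumset (T0 :\: sd S1 S2) = X.
    have -> : T0 :\: sd S1 S2 = sd T0 (sd S1 S2).
      apply/setP => i; have hs := subsetP ssub i; rewrite in_sd in hs.
      move: hs; rewrite in_sd !inE.
      by case: (i \in S1); case: (i \in S2); case: (i \in T0) => // /(_ isT).
    by rewrite sumset_sd z -hX; apply/setP => p; rewrite in_sd !inE /= addbF.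
  have := hmin _ (subsetDl _ _) hT1.
  have := cardsID (sd S1 S2) T0.
  rewrite (setIidPr ssub) => hc hle.
  have : #|sd S1 S2| = 0 by lia.
  by move/eqP; rewrite cards_eq0 => /eqP /sd0.
have hsub : f @: powerset T0 \subset powerset (E' :\: Q).
  apply/subsetP => Z /imsetP[S]; rewrite powersetE => sS ->.
  rewrite powersetE; apply/subsetP => p; rewrite !inE => /andP[-> pS] /=.
  have : p \in \bigcup_(i in S) P i by apply: (subsetP (sumset_sub S)); rewrite inE.
  case/bigcupP => i iS pi; apply/bigcupP; exists i => //; exact: (subsetP sS).
have := subset_leq_card hsub.
rewrite (card_in_imset finj) !card_powerset leq_exp2l // => hle.
have QE : Q \subset E' by rewrite (subset_trans hQ) // -hX sumset_sub.
have := cardsID Q E'; rewrite (setIidPr QE); lia.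
Qed.

Lemma dc_lower (T0 : {set I}) (X : {set T}) :
  sumset T0 = X ->
  2 * #|\bigcup_(i in T0) P i| <= \sum_(i in T0) #|P i| + #|X|.
Proof.
move=> hX.
have e1 : \sum_(i in T0) #|P i| = \sum_p mult T0 p.
  transitivity (\sum_(i in T0) #|P i :&: setT|).
    by apply: eq_bigr => i _; rewrite setIT.
  by rewrite -double_count; apply: eq_bigl => p; rewrite in_setT.
rewrite e1 [#|X|]card_ind [#|\bigcup_(i in T0) P i|]card_ind big_distrr /= -big_split /=.
apply: leq_sum => p _.
case hp: (p \in \bigcup_(i in T0) P i); last by rewrite muln0.
have hpos : 0 < mult T0 p.
  case/bigcupP: hp => i iT pi; apply/card_gt0P; exists i; by rewrite inE iT.
move/setP: hX => /(_ p); rewrite inE => <-.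
case: (boolP (odd (mult T0 p))) => /= ho; first lia.
case: (mult T0 p) hpos ho => [//|[|k]] //= _ _; lia.
Qed.

End Fam.

Lemma star_card_r v u lam (y : 'I_u) : #|star lam (inr y : vtx v u)| = v * lam.
Proof.
pose f (z : 'I_v * 'I_lam) : edge v u lam := ((z.1, y), z.2).
have -> : star lam (inr y : vtx v u) = f @: setT.
  apply/setP => [[[a b] k]]; rewrite /star /inc !inE /=.
  apply/idP/imsetP.
    by move/eqP => [<-]; exists (a, k).
  by case=> [[a' k']] _ [_ -> _].
rewrite card_imset; last by move=> [a k] [a' k'] [-> ->].
by rewrite cardsT card_prod !card_ord.
Qed.

Lemma star_card_l v u lam (x : 'I_v) : #|star lam (inl x : vtx v u)| = u * lam.
Proof.
pose f (z : 'I_u * 'I_lam) : edge v u lam := ((x, z.1), z.2).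
have -> : star lam (inl x : vtx v u) = f @: setT.
  apply/setP => [[[a b] k]]; rewrite /star /inc !inE /= orbF.
  apply/idP/imsetP.
    by move/eqP => [<-]; exists (b, k).
  by case=> [[b' k']] _ [-> _ _].
rewrite card_imset; last by move=> [a k] [a' k'] [-> ->].
by rewrite cardsT card_prod !card_ord.
Qed.

Lemma edge_card v u lam : #|[set: edge v u lam]| = lam * v * u.
Proof. by rewrite cardsT !card_prod !card_ord; lia. Qed.

Section Main.
Variables (v u lam : nat) (M : seq nat).
Local Notation n := (size M).
Local Notation E := (edge v u lam).
Local Notation Pr := ('I_v * 'I_u)%type.
Variable C : 'I_n -> {set E}.
Hypotheses (disj : forall i j, i != j -> [disjoint C i & C j])
  (cov : forall e : E, exists i, e \in C i)
  (cyc : forall i : 'I_n, is_cycle (nth 0 M i) (C i)).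
Local Notation ms i := (nth 0 M (nat_of_ord i)).

Lemma tot_len : \sum_(i < n) ms i = lam * v * u.
Proof.
rewrite -edge_card (part_card disj cov); apply: eq_bigr => i _.
by rewrite setTI (is_cycle_card (cyc i)).
Qed.

Lemma deg_even (w : vtx v u) : ~~ odd #|star lam w|.
Proof.
rewrite (part_card disj cov); apply: sum_even => i _.
by rewrite setIC; apply: is_cycle_deg (cyc i).
Qed.

Definition edgesof (p : Pr) : {set E} := [set e : E | pr e == p].

Lemma edgesof_card p : #|edgesof p| = lam.
Proof.
pose f (k : 'I_lam) : E := (p, k).
have -> : edgesof p = f @: setT.
  apply/setP => [[q k]]; rewrite /edgesof /pr !inE /=.
  apply/idP/imsetP.
    by move/eqP => ->; exists k.
  by case=> k' _ [-> _].
by rewrite card_imset ?cardsT ?card_ord // => a b [].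
Qed.

Lemma pair_split p : #|edgesof p| = \sum_(i < n) #|edgesof p :&: C i|.
Proof. exact: (part_card disj cov). Qed.

End Main.

Lemma count_card (M : seq nat) k :
  count (pred1 k) M = #|[set i : 'I_(size M) | nth 0 M i == k]|.
Proof.
by rewrite -sum1_count (big_nth 0) big_mkord sum1dep_card.
Qed.

Section Nu2.
Variables (v u lam : nat) (M : seq nat).
Local Notation n := (size M).
Local Notation E := (edge v u lam).
Local Notation Pr := ('I_v * 'I_u)%type.
Variable C : 'I_n -> {set E}.
Hypotheses (disj : forall i j, i != j -> [disjoint C i & C j])
  (cov : forall e : E, exists i, e \in C i)
  (cyc : forall i : 'I_n, is_cycle (nth 0 M i) (C i)).
Local Notation ms i := (nth 0 M (nat_of_ord i)).

Definition Q2 (i : 'I_n) : {set Pr} :=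
  if ms i == 2 then [set p | C i \subset edgesof lam p] else set0.

Lemma Q2_card i : #|Q2 i| = (ms i == 2).
Proof.
rewrite /Q2; case: eqP => [h2|]; last by rewrite cards0.
have c2 := cyc i; rewrite h2 in c2.
have : 0 < #|C i| by rewrite (is_cycle_card c2).
case/card_gt0P => e0 he0.
have -> : [set p | C i \subset edgesof lam p] = [set pr e0].
  apply/setP => p; rewrite !inE; apply/idP/eqP.
    by move/subsetP => /(_ e0 he0); rewrite inE => /eqP.
  move=> ->; apply/subsetP => e he; rewrite inE.
  by rewrite (is_cycle2_pair c2 he he0).
by rewrite cards1.
Qed.

Lemma Q2_per_pair p : odd lam -> 2 * #|[set i | p \in Q2 i]| <= lam - 1.
Proof.
move=> ol.
have h : 2 * #|[set i | p \in Q2 i]| <= lam.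
  rewrite -{1}(edgesof_card lam p) (pair_split disj cov) (bigID (fun i => p \in Q2 i)) /=.
  apply: leq_trans (leq_addr _ _).
  rewrite mulnC -sum_nat_cond_const; apply: leq_sum => i.
  rewrite /Q2; case: eqP => [h2|]; last by rewrite inE.
  rewrite inE => /setIidPr ->.
  by rewrite (is_cycle_card (cyc i)) h2.
have := odd_double_half lam; rewrite ol -muln2.
move: h; set k := #|_|; lia.
Qed.

Lemma nu2_bound : odd lam -> 2 * nu 2 M <= (lam - 1) * v * u.
Proof.
move=> ol.
have e1 : nu 2 M = \sum_(p in [set: Pr]) #|[set i in [set: 'I_n] | p \in Q2 i]|.
  rewrite double_count /nu count_card card_ind.
  by apply: eq_big => [i|i _]; rewrite ?inE // setIT Q2_card.
rewrite e1 big_distrr /=.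
apply: (@leq_trans (\sum_(p in [set: Pr]) (lam - 1))).
  apply: leq_sum => p _.
  have -> : [set i in [set: 'I_n] | p \in Q2 i] = [set i | p \in Q2 i].
    by apply/setP => i; rewrite !inE.
  exact: Q2_per_pair.
by rewrite sum_nat_const cardsT card_prod !card_ord; lia.
Qed.

End Nu2.

Lemma imset_starP v u lam (D : {set edge v u lam}) w :
  {in D &, injective (@pr v u lam)} ->
  #|@pr v u lam @: D :&: starP w| = #|D :&: star lam w|.
Proof.
move=> inj.
have -> : @pr v u lam @: D :&: starP w = @pr v u lam @: (D :&: star lam w).
  apply/setP => p; rewrite !inE; apply/andP/imsetP.
    case=> /imsetP[e eD ->] h; exists e => //; by rewrite !inE eD.
  case=> e; rewrite !inE => /andP[eD h] ->; split; last by [].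
  exact: imset_f.
rewrite card_in_imset //; move=> a b /setIP[aD _] /setIP[bD _]; exact: inj.
Qed.

Section PartC.
Variables (v u lam : nat) (M : seq nat).
Local Notation n := (size M).
Local Notation E := (edge v u lam).
Local Notation Pr := ('I_v * 'I_u)%type.
Variable C : 'I_n -> {set E}.
Hypotheses (disj : forall i j, i != j -> [disjoint C i & C j])
  (cov : forall e : E, exists i, e \in C i)
  (cyc : forall i : 'I_n, is_cycle (nth 0 M i) (C i)).
Local Notation ms i := (nth 0 M (nat_of_ord i)).
Local Notation prr := (@pr v u lam).

Definition Pi (i : 'I_n) : {set Pr} := if 2 < ms i then prr @: C i else set0.

Lemma Pi_even (i : 'I_n) w : ~~ odd #|Pi i :&: starP w|.
Proof.
rewrite /Pi; case: ifP => h; last by rewrite set0I cards0.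
rewrite imset_starP; first exact: is_cycle_deg (cyc i).
exact: is_cycle_prinj (cyc i) h.
Qed.

Lemma Pi_card (i : 'I_n) : #|Pi i| <= ms i.
Proof.
rewrite /Pi; case: ifP => h; last by rewrite cards0.
by rewrite -(is_cycle_card (cyc i)) leq_imset_card.
Qed.

Lemma sumset_even (S : {set 'I_n}) w : ~~ odd #|sumset Pi S :&: starP w|.
Proof.
have -> : #|sumset Pi S :&: starP w| = #|[set p in starP w | odd (mult Pi S p)]|.
  by apply: eq_card => p; rewrite !inE andbC.
rewrite -sum_odd_card /mult double_count.
apply: sum_even => i _; exact: Pi_even.
Qed.

Lemma pair_term (i : 'I_n) p : odd #|edgesof lam p :&: C i| = (p \in Pi i).
Proof.
rewrite /Pi; case: ifP => h.
  case: (boolP (p \in prr @: C i)) => [/imsetP[e eC ->]|np].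
    have -> : edgesof lam (pr e) :&: C i = [set e].
      apply/setP => f; rewrite !inE; apply/andP/eqP.
        case=> /eqP hf fC; exact: (is_cycle_prinj (cyc i) h fC eC hf).
      by move=> ->; rewrite eqxx.
    by rewrite cards1.
  have -> : edgesof lam p :&: C i = set0.
    apply/setP => f; rewrite !inE; apply/negP => /andP[/eqP hf fC].
    by move: np; rewrite -hf imset_f.
  by rewrite cards0.
have h2 : ms i = 2.
  have := is_cycle_ge2 (cyc i); move: h; case: (ms i) => [|[|[|k]]] //.
have c2 := cyc i; rewrite h2 in c2.
rewrite inE; case: (set_0Vmem (edgesof lam p :&: C i)) => [->|[e]]; first by rewrite cards0.
rewrite !inE => /andP[/eqP he eC].
have -> : edgesof lam p :&: C i = C i.
  apply/setIidPr; apply/subsetP => f fC; rewrite inE.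
  by rewrite (is_cycle2_pair c2 fC eC) he.
by rewrite (is_cycle_card c2).
Qed.

Lemma mult_all_even p : ~~ odd lam -> ~~ odd (mult Pi [set: 'I_n] p).
Proof.
move=> el.
rewrite /mult card_cond.
rewrite -(@sum_odd_eq _ _ (fun i => #|edgesof lam p :&: C i|)); last first.
  by move=> i _; rewrite pair_term oddb.
have -> : \sum_(i in [set: 'I_n]) #|edgesof lam p :&: C i| = \sum_(i < n) #|edgesof lam p :&: C i|.
  by apply: eq_bigl => i; rewrite in_setT.
by rewrite -(pair_split disj cov) edgesof_card.
Qed.

Lemma sumset_T (s : 'I_n) : ~~ odd lam -> sumset Pi [set~ s] = Pi s.
Proof.
move=> el; apply/setP => p; rewrite inE.
have := mult_all_even p el; rewrite /mult (cardsD1 s).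
have -> : [set i in [set: 'I_n] | p \in Pi i] :\ s = [set i in [set~ s] | p \in Pi i].
  by apply/setP => i; rewrite !inE andbC.
rewrite !inE oddD /=; by case: (p \in Pi s); case: (odd #|[set i in [set~ s] | p \in Pi i]|).
Qed.

Lemma part_c (s : 'I_n) : ~~ odd lam -> n + ms s <= lam %/ 2 * v * u + 2.
Proof.
move=> el.
have tot := tot_len disj cov cyc.
have hl : lam * v * u = 2 * (lam %/ 2 * v * u).
  have := odd_double_half lam; rewrite (negbTE el) add0n -muln2 => h.
  by rewrite -{1}h; lia.
have ge2 : forall i : 'I_n, 2 <= ms i by move=> i; exact: is_cycle_ge2 (cyc i).
case: (leqP (ms s) 2) => h3.
  have : \sum_(i < n) 2 <= \sum_(i < n) ms i by apply: leq_sum => i _.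
  rewrite sum_nat_const card_ord tot hl.
  have := ge2 s; move: (lam %/ 2 * v * u) => K; lia.
have Ps : Pi s = prr @: C s by rewrite /Pi h3.
have hT := sumset_T s el.
pose good (S : {set 'I_n}) := (S \subset [set~ s]) && (sumset Pi S == Pi s).
have gT : good [set~ s] by rewrite /good subxx hT eqxx.
case: (@arg_minnP _ [set~ s] good (fun S => #|S|) gT) => T0 /andP[sT0 /eqP hT0] hmin.
have [q [qin hpath]] := is_cycle_path (cyc s) h3.
have ib := @indep_bound _ _ Pi T0 (Pi s) (prr @: C s :\ q) hT0.
have {}ib : #|T0| + #|prr @: C s :\ q| <= #|\bigcup_(i in T0) Pi i|.
  apply: ib.
  - move=> T1 sT1 h1; apply: hmin; by rewrite /good h1 eqxx (subset_trans sT1 sT0).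
  - by rewrite Ps subD1set.
  - move=> S _ hS; apply: hpath => //; exact: sumset_even.
have dl := dc_lower hT0.
have cPs : #|prr @: C s| = ms s.
  by rewrite card_in_imset ?(is_cycle_card (cyc s)) //; exact: is_cycle_prinj (cyc s) h3.
have cQ : #|prr @: C s :\ q| + 1 = ms s.
  by rewrite -cPs (cardsD1 q (prr @: C s)) qin addnC.
have sP : \sum_(i in T0) #|Pi i| <= \sum_(i in T0) ms i by apply: leq_sum => i _; exact: Pi_card.
have sT0s : s \notin T0.
  by apply/negP => /(subsetP sT0); rewrite in_setC1 eqxx.
have split1 : \sum_(i < n) ms i = \sum_(i in T0) ms i + \sum_(i | i \notin T0) ms i.
  exact: bigID.
have split2 : \sum_(i | i \notin T0) ms i = ms s + \sum_(i | (i \notin T0) && (i != s)) ms i.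
  exact: (bigD1 s).
rewrite split2 in split1.
set R := [set i | (i \notin T0) && (i != s)].
have sR : 2 * #|R| <= \sum_(i | (i \notin T0) && (i != s)) ms i.
  rewrite mulnC -sum_nat_cond_const; apply: leq_sum => i _; exact: ge2.
have cR : #|T0| + #|R| + 1 = n.
  have := cardsC T0; rewrite card_ord (cardsD1 s (~: T0)) !inE sT0s /= => hc.
  have e : ~: T0 :\ s = R by apply/setP => i; rewrite !inE andbC.
  rewrite e in hc; lia.
rewrite (Ps) in dl.
move: tot; rewrite hl split1 => tot.
move: ib dl sP sR cR cQ cPs tot.
move: (\sum_(i | (i \notin T0) && (i != s)) ms i) (\sum_(i in T0) ms i)
      (\sum_(i in T0) #|Pi i|) #|\bigcup_(i in T0) Pi i| (lam %/ 2 * v * u).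
move=> B SA SP e K g1 g2 g3 g4 g5 g6 g7 g8.
move: g1 g2 g3 g4 g5 g6 g7 g8.
move: #|T0| #|R| (ms s) #|[set prr x | x in C s] :\ q| #|[set prr x | x in C s]|.
lia.
Qed.

End PartC.

Theorem theorem2 (lam v u : nat) (M : seq nat) :
  0 < lam -> 0 < v -> 0 < u ->
  sorted leq M -> all (fun m => ~~ odd m) M ->
  cycle_decomposition v u lam M ->
  [/\ last 0 M <= 2 * minn v u,
      (lam * v) %% 2 = 0 /\ (lam * u) %% 2 = 0,
      ~~ odd lam -> size M + last 0 M <= lam %/ 2 * v * u + 2
    & odd lam -> 2 * nu 2 M <= (lam - 1) * v * u].
Proof.
move=> hl hv hu _ _ [C [disj [cov cyc]]].
pose e0 : edge v u lam := ((Ordinal hv, Ordinal hu), Ordinal hl).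
have hn : 0 < size M by case: (cov e0) => i _; exact: (leq_ltn_trans (leq0n i) (ltn_ord i)).
have hs : (size M).-1 < size M by rewrite ltn_predL.
pose s : 'I_(size M) := Ordinal hs.
have lastE : last 0 M = nth 0 M s by rewrite /= nth_last.
rewrite lastE; split.
- have [b1 b2] := is_cycle_bound (cyc s); lia.
- split.
  + have := deg_even disj cov cyc (inr (Ordinal hu)).
    by rewrite star_card_r modn2 mulnC; case: odd.
  + have := deg_even disj cov cyc (inl (Ordinal hv)).
    by rewrite star_card_l modn2 mulnC; case: odd.
- exact: part_c disj cov cyc s.
- exact: nu2_bound disj cov cyc.
Qed.
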